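(* Let $K\subseteq\mathbb{R}^n$ be a compact convex set and $P=\{\mathbf{x}\in\mathbb{R}^n:\mathsf{A}\mathbf{x}\le\mathbf{b}\}$, $\mathsf{A}\in\mathbb{R}^{m\times n}$, $\mathbf{b}\in\mathbb{R}^m$, with $P\cap K=\emptyset$. For $\boldsymbol\varepsilon\in\mathbb{R}^m$ let $P_{\boldsymbol\varepsilon}:=\{\mathbf{x}\in\mathbb{R}^n:\mathsf{A}\mathbf{x}\le\mathbf{b}+\boldsymbol\varepsilon\}$. Then for every $\boldsymbol\varepsilon\in\mathbb{R}^m$, either $K\cap P_{\boldsymbol\varepsilon}=\emptyset$, or there exists $j\in[m]$ with $\varepsilon_j>0$ and $K\cap P_{\boldsymbol\varepsilon-(n+1)\varepsilon_j\mathbf{e}_j}=\emptyset$.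
   Context: $\mathbf{e}_j$ denotes the $j$-th standard basis vector of $\mathbb{R}^m$. *)

(* Defs.v *)
From HB Require Import structures.
From mathcomp Require Import all_boot all_order all_algebra.
From mathcomp Require Import all_classical all_reals all_analysis.
Set Implicit Arguments. Unset Strict Implicit. Unset Printing Implicit Defensive.
Import Order.TTheory GRing.Theory Num.Theory.
Import numFieldNormedType.Exports.
Local Open Scope ring_scope.
Local Open Scope classical_set_scope.

Definition polyhedron (R : realType) (m n : nat) (A : 'M[R]_(m, n))
    (b : 'cV[R]_m) : set 'cV[R]_n :=
  [set x | forall i : 'I_m, (A *m x) i ord0 <= b i ord0].

Definition std_basis (R : realType) (m : nat) (j : 'I_m) : 'cV[R]_m :=
  delta_mx j ord0.

(* Main.v *)
Require Import Defs.
From HB Require Import structures.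
From mathcomp Require Import all_boot all_order all_algebra.
From mathcomp Require Import all_classical all_reals all_analysis.
From mathcomp Require Import lra.
Import Order.TTheory GRing.Theory Num.Theory.
Import numFieldNormedType.Exports.
Local Open Scope ring_scope.
Local Open Scope classical_set_scope.
Lemma conv2 (R : realType) n (K : set 'cV[R]_n) x y (t : R) :
  convex_set K -> K x -> K y -> 0 <= t -> t <= 1 -> K (t *: x + (1 - t) *: y).
Proof.
move=> cK Kx Ky t0 t1.
have := cK x y (Itv01 t0 t1); rewrite !inE => /(_ Kx Ky).
by [].
Qed.
Lemma sum0_scale (R : realType) n (I : Type) (P : pred I)
  (w : I -> R) (q : I -> 'cV[R]_n) (s : seq I) :
  (forall i, P i -> 0 <= w i) -> \sum_(i <- s | P i) w i = 0 ->
  \sum_(i <- s | P i) w i *: q i = 0.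
Proof.
move=> H; elim: s => [|a s IH]; first by rewrite !big_nil.
rewrite !big_cons; case: ifP => Pa; last exact: IH.
have W0 : 0 <= \sum_(i <- s | P i) w i by apply: sumr_ge0 => i /H.
move=> /eqP; rewrite paddr_eq0 ?H // => /andP[/eqP -> /eqP /IH ->].
by rewrite scale0r addr0.
Qed.

Lemma convex_comb (R : realType) n (K : set 'cV[R]_n) (I : Type) (P : pred I)
  (w : I -> R) (q : I -> 'cV[R]_n) (s : seq I) :
  convex_set K -> (forall i, P i -> 0 <= w i /\ K (q i)) ->
  \sum_(i <- s | P i) w i = 1 -> K (\sum_(i <- s | P i) w i *: q i).
Proof.
move=> cK; elim: s w => [|a s IH] w H; first by rewrite big_nil => /eqP; rewrite eq_sym oner_eq0.
rewrite !big_cons; case: ifP => Pa; last exact: IH.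
have [wa0 Kqa] := H a Pa.
have W0 : 0 <= \sum_(i <- s | P i) w i by apply: sumr_ge0 => i /H [].
move=> Hs.
have [Wz|Wpos] := eqVneq (\sum_(i <- s | P i) w i) 0.
  rewrite sum0_scale //; last by move=> i /H [].
  move: Hs; rewrite Wz addr0 => ->; rewrite addr0 scale1r //.
set W := \sum_(i <- s | P i) w i in Hs Wpos W0.
have Wgt : 0 < W by rewrite lt_neqAle eq_sym Wpos.
have -> : \sum_(i <- s | P i) w i *: q i = W *: \sum_(i <- s | P i) (w i / W) *: q i.
  rewrite scaler_sumr; apply: eq_bigr => i _; rewrite scalerA mulrCA divff ?mulr1 //.
have KW : K (\sum_(i <- s | P i) (w i / W) *: q i).
  apply: IH.
  + move=> i /H [? ?]; split=> //; apply: divr_ge0 => //; exact: ltW.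
  + by rewrite -mulr_suml -/W divff.
move: KW; set z := \sum_(i <- s | P i) _ => Kz.
have -> : W = 1 - w a by rewrite -Hs addrAC subrr add0r.
apply: conv2 => //.
by rewrite -Hs lerDl.
Qed.
Lemma radon (R : realType) n N (p : 'I_N -> 'cV[R]_n) : (n.+1 < N)%N ->
  exists lam : 'I_N -> R, (exists k, lam k != 0) /\ \sum_k lam k = 0 /\
    \sum_k lam k *: p k = 0.
Proof.
move=> hN.
pose P : 'M[R]_(N, n) := \matrix_(k, j) p k j ord0.
pose M : 'M[R]_(N, n + 1) := row_mx P (const_mx 1).
have nf : ~~ row_free M.
  rewrite -row_leq_rank -ltnNge; apply: leq_ltn_trans (rank_leq_col M) _.
  by rewrite addn1.
have : kermx M != 0 by rewrite kermx_eq0.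
move=> Hk.
have [i [j Hij]] : exists i j, kermx M i j != 0.
  apply: contrapT => Hn; move/eqP: Hk; apply; apply/matrixP => i j;
  apply: contrapT => Hne; apply: Hn; exists i; exists j; apply/eqP => E; apply: Hne; by rewrite E mxE.
pose v := row i (kermx M).
have vM : v *m M = 0 by rewrite -row_mul mulmx_ker row0.
move: vM; rewrite mul_mx_row => /eqP; rewrite row_mx_eq0 => /andP[/eqP vP /eqP v1].
exists (fun k => v ord0 k); split; first by exists j; rewrite mxE.
split.
  transitivity ((v *m (const_mx 1 : 'M[R]_(N, 1))) ord0 ord0); last by rewrite v1 mxE.
  by rewrite mxE; apply: eq_bigr => k _; rewrite [X in _ * X]mxE mulr1.
apply/matrixP => a b; rewrite (ord1 b) summxE [RHS]mxE.
transitivity ((v *m P) ord0 a); last by rewrite vP mxE.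
by rewrite mxE; apply: eq_bigr => k _; rewrite !mxE.
Qed.

Lemma comb_row (R : realType) m n (A : 'M[R]_(m, n)) (I : finType) (P : pred I)
  (w : I -> R) (q : I -> 'cV[R]_n) (i : 'I_m) (be : R) :
  (forall c, P c -> 0 <= w c /\ (A *m q c) i ord0 <= be) ->
  \sum_(c | P c) w c = 1 -> (A *m \sum_(c | P c) w c *: q c) i ord0 <= be.
Proof.
move=> H Hw; rewrite mulmx_sumr summxE.
under eq_bigr do rewrite -scalemxAr mxE.
apply: (@le_trans _ _ (\sum_(c | P c) w c * be)).
  by apply: ler_sum => c /H [h1 h2]; apply: ler_wpM2l.
by rewrite -mulr_suml Hw mul1r.
Qed.

Definition feas (R : realType) m n (K : set 'cV[R]_n) (A : 'M[R]_(m, n))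
  (be : 'cV[R]_m) (S : {set 'I_m}) :=
  exists x, K x /\ forall i, i \in S -> (A *m x) i ord0 <= be i ord0.
Arguments feas {R m n}.

Lemma helly (R : realType) m n (K : set 'cV[R]_n) (A : 'M[R]_(m, n))
  (be : 'cV[R]_m) : convex_set K ->
  (forall S : {set 'I_m}, (#|S| <= n.+1)%N -> feas K A be S) -> forall S, feas K A be S.
Proof.
move=> cK Hs S; have [N] := ubnP #|S|; elim: N S => // N IH S hS.
have [small|big] := leqP #|S| n.+1; first exact: Hs.
have : forall k, exists x, k \in S -> K x /\
    forall i, i \in S :\ k -> (A *m x) i ord0 <= be i ord0.
  move=> k; have [kS|kS] := boolP (k \in S); last by exists 0.
  have [x [Kx Hx]] : feas K A be (S :\ k).
    apply: IH; rewrite (cardsD1 k S) kS /= add1n ltnS in hS; exact: hS.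
  by exists x.
case/choice => p Hp.
pose q := fun c : 'I_#|S| => p (enum_val c).
have [lam [[k0 lk0] [sl sq]]] := @radon _ _ _ q big.
pose Pp := fun c => 0 < lam c.
pose T := \sum_(c | Pp c) lam c.
have sl2 : T + \sum_(c | ~~ Pp c) lam c = 0.
  by move: sl; rewrite (bigID Pp) /=.
have sq2 : \sum_(c | Pp c) lam c *: q c + \sum_(c | ~~ Pp c) lam c *: q c = 0.
  by move: sq; rewrite (bigID Pp) /=.
have Tpos : 0 < T.
  have [lpos|lneg] := ltP 0 (lam k0).
    rewrite /T (bigD1 k0) //=.
    have : 0 <= \sum_(c | Pp c && (c != k0)) lam c.
      by apply: sumr_ge0 => c /andP[/ltW].
    lra.
  have : \sum_(c | ~~ Pp c) lam c <= lam k0.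
    rewrite (bigD1 k0) /Pp -?leNgt //=.
    have : \sum_(c | ~~ (0 < lam c) && (c != k0)) lam c <= 0.
      by apply: sumr_le0 => c /andP[]; rewrite -leNgt.
    lra.
  have : lam k0 < 0 by rewrite lt_neqAle lk0 lneg.
  lra.
pose z := \sum_(c | Pp c) (lam c / T) *: q c.
have zE2 : z = \sum_(c | ~~ Pp c) (- lam c / T) *: q c.
  have -> : z = T^-1 *: \sum_(c | Pp c) lam c *: q c.
    by rewrite scaler_sumr; apply: eq_bigr => c _; rewrite scalerA mulrC.
  have -> : \sum_(c | Pp c) lam c *: q c = - \sum_(c | ~~ Pp c) lam c *: q c.
    by apply/eqP; rewrite -subr_eq0 opprK sq2.
  rewrite -sumrN scaler_sumr; apply: eq_bigr => c _.
  by rewrite scalerN scalerA -scaleNr mulrC mulNr.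
exists z; split.
  apply: convex_comb => //.
    move=> c Pc; split; last by apply: (proj1 (Hp _ (enum_valP c))).
    by apply: divr_ge0; [exact: ltW | exact: ltW].
  by rewrite -mulr_suml divff // gt_eqF.
move=> i iS.
pose ci := enum_rank_in iS i.
have eci : enum_val ci = i := enum_rankK_in iS iS.
have Hq : forall c, c != ci -> (A *m q c) i ord0 <= be i ord0.
  move=> c cne; apply: (proj2 (Hp _ (enum_valP c))).
  rewrite !inE iS andbT; apply: contra cne.
  by rewrite -eci => /eqP /enum_val_inj ->.
have [lci|lci] := boolP (Pp ci).
  rewrite zE2; apply: comb_row.
    move=> c nPc; split.
      apply: divr_ge0; last exact: ltW.
      by rewrite oppr_ge0 leNgt.
    by apply: Hq; apply: contraNneq nPc => ->.
  rewrite -mulr_suml sumrN.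
  have -> : - \sum_(c | ~~ Pp c) lam c = T by lra.
  by rewrite divff // gt_eqF.
apply: comb_row.
  move=> c Pc; split.
    by apply: divr_ge0; [exact: ltW | exact: ltW].
  by apply: Hq; apply: contraTneq Pc => ->.
by rewrite -mulr_suml divff // gt_eqF.
Qed.

Theorem lemma2p3 (R : realType) (m n : nat) (K : set 'cV[R]_n)
    (A : 'M[R]_(m, n)) (b : 'cV[R]_m) :
  compact K -> convex_set K ->
  K `&` polyhedron A b = set0 ->
  forall eps : 'cV[R]_m,
    K `&` polyhedron A (b + eps) = set0 \/
    exists j : 'I_m, 0 < eps j ord0 /\
      K `&` polyhedron A (b + (eps - (n.+1%:R * eps j ord0) *: @std_basis R m j)) = set0.
Proof.
move=> _ cK HP eps.
have [S [hS nfS]] : exists S : {set 'I_m}, (#|S| <= n.+1)%N /\ ~ feas K A b S.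
  apply: contrapT => Hn.
  have [x [Kx Hx]] : feas K A b [set: 'I_m]%SET.
    apply: helly => // S hS; apply: contrapT => nf; apply: Hn; by exists S.
  have : (K `&` polyhedron A b) x by split => // i; apply: Hx; rewrite inE.
  by rewrite HP.
have [H|H] := pselect (K `&` polyhedron A (b + eps) = set0); [by left | right].
have [x0 [Kx0 Px0]] : exists x, K x /\ polyhedron A (b + eps) x.
  apply: contrapT => Hn; apply: H; apply/seteqP; split => x // [Kx Px].
  by apply: Hn; exists x.
apply: contrapT => Hn.
have : forall j, exists x, 0 < eps j ord0 -> K x /\
    polyhedron A (b + (eps - (n.+1%:R * eps j ord0) *: @std_basis R m j)) x.
  move=> j; have [ej|ej] := boolP (0 < eps j ord0); last by exists 0.
  apply: contrapT => nx; apply: Hn; exists j; split => //.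
  apply/seteqP; split => x // [Kx Px]; apply: nx; by exists x.
case/choice => p Hp.
pose Sp := [set j in S | 0 < eps j ord0].
have Pj : forall j, j \in Sp -> K (p j) /\ forall i,
    (A *m p j) i ord0 <= b i ord0 + eps i ord0 - (n.+1%:R * eps j ord0) * (i == j)%:R.
  move=> j; rewrite inE => /andP[_ ej]; have [Kp Pp] := Hp j ej; split => // i.
  by have := Pp i; rewrite !mxE eqxx andbT addrA.
apply: nfS.
have [Sp0|Spn] := eqVneq #|Sp| 0%N.
  exists x0; split => // i iS; have := Px0 i; rewrite !mxE.
  have : i \notin Sp by apply/negP => iSp; move/eqP: Sp0; apply/negP; rewrite -lt0n; apply/card_gt0P; exists i.
  rewrite inE iS /= -leNgt => ei; lra.
pose k := #|Sp|.
have kpos : (0 < k%:R :> R) by rewrite ltr0n lt0n.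
have kle : (k%:R <= n.+1%:R :> R).
  rewrite ler_nat; apply: leq_trans hS; apply: subset_leq_card.
  by apply/fintype.subsetP => j; rewrite inE => /andP[].
pose r : R := k%:R^-1.
have rk : r * k%:R = 1 by rewrite mulVf // gt_eqF.
have rpos : 0 < r by rewrite invr_gt0.
have sumr1 : \sum_(j in Sp) r = 1 by rewrite sumr_const -mulr_natr. 
exists (\sum_(j in Sp) r *: p j); split.
  apply: convex_comb => // j jS; split; [exact: ltW | exact: (Pj j jS).1].
move=> i iS.
have [iSp|iSp] := boolP (i \in Sp).
  have ei : 0 < eps i ord0 by move: iSp; rewrite inE => /andP[].
  rewrite mulmx_sumr summxE.
  under eq_bigr do rewrite -scalemxAr mxE.
  set B := b i ord0 + eps i ord0.
  have HB : B = r * B + \sum_(j in Sp | j != i) r * B.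
    by rewrite -(bigD1 i) //= -mulr_suml sumr1 mul1r.
  have Hrest : \sum_(j in Sp | j != i) r * (A *m p j) i ord0 <= \sum_(j in Sp | j != i) r * B.
    apply: ler_sum => j /andP[jS ji]; apply: ler_wpM2l; first exact: ltW.
    by have := (Pj j jS).2 i; rewrite eq_sym (negbTE ji) mulr0 subr0.
  rewrite (bigD1 i) //=.
  have Hi : r * (A *m p i) i ord0 <= r * (B - n.+1%:R * eps i ord0).
    apply: ler_wpM2l; first exact: ltW.
    by have := (Pj i iSp).2 i; rewrite eqxx mulr1.
  have : r * n.+1%:R * eps i ord0 >= eps i ord0.
    have : r * k%:R <= r * n.+1%:R by apply: ler_wpM2l => //; exact: ltW.
    nra.
  rewrite mulrBr mulrA in Hi; have hBd : B = b i ord0 + eps i ord0 by []; lra.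
apply: comb_row; last exact: sumr1.
move=> j jS; split; first exact: ltW.
have ei : eps i ord0 <= 0 by move: iSp; rewrite inE iS /= -leNgt.
have ji : (i == j) = false by apply/negP => /eqP ij; move: iSp; rewrite ij jS.
by have := (Pj j jS).2 i; rewrite ji mulr0 subr0 => h; lra.
Qed.
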